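(* Let $F/\mathbb{Q}_p$ be a finite extension with ring of integers $\mathcal{O}_F$, ramification degree $e$, and residue field of cardinality $q$. Let $\nu_F$ be the right Haar measure on $\mathrm{SL}_2(F)$ normalized by $\nu_F(\mathrm{SL}_2(\mathcal{O}_F)) = 1$. For $a \in \mathbb{Z}_p \setminus \{0\}$ let \[S_F(a) = \left\{ \begin{pmatrix} \alpha_{11} & \alpha_{12} \\ \alpha_{21} & \alpha_{22} \end{pmatrix} \in \mathrm{SL}_2(F) : \begin{pmatrix} a\alpha_{11} & \alpha_{12} \\ a\alpha_{21} & \alpha_{22} \end{pmatrix} \in \mathrm{M}_2(\mathcal{O}_F) \right\}.\] Then $\nu_F(S_F(a)) = \dfrac{1 - q^{e v_p(a) + 1}}{1 - q}$, where $v_p$ is the normalized $p$-adic valuation. *)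

(* Defs.v *)
From HB Require Import structures.
From mathcomp Require Import all_boot all_order all_algebra.
From mathcomp Require Import all_classical all_reals all_analysis.
Set Implicit Arguments.
Unset Strict Implicit.
Unset Printing Implicit Defensive.
Import Order.TTheory GRing.Theory Num.Theory.
Local Open Scope ring_scope.
Local Open Scope classical_set_scope.

(* the value v 0 is irrelevant (v(0) = +oo is encoded by vge below).   *)

Definition vge (F : fieldType) (v : F -> int) (x : F) (n : int) : bool :=
  (x == 0) || (n <= v x)%R.

Definition in_OF (F : fieldType) (v : F -> int) (x : F) : bool := vge v x 0.

(* F, with the normalized discrete valuation v, is a finite extension of
   Q_p whose residue field has q elements.  Equivalently (standard
   structure theorem of local fields): F is a field of characteristic 0,
   complete for a normalized (surjective onto Z) discrete valuation v,
   whose residue field O_F / m_F is finite with q elements and has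
   characteristic p (i.e. v(p) >= 1). *)
Record padic_local_field (F : fieldType) (p : nat) (v : F -> int) (q : nat)
  : Prop := {
  plf_prime : prime p;
  plf_char0 : forall n : nat, (n%:R : F) = 0 -> n = 0%N;
  plf_vmul : forall x y : F, x != 0 -> y != 0 -> v (x * y) = v x + v y;
  plf_vadd : forall x y : F, x != 0 -> y != 0 -> x + y != 0 ->
               Num.min (v x) (v y) <= v (x + y);
  plf_normalized : exists pi : F, pi != 0 /\ v pi = 1;
  plf_complete : forall u : nat -> F,
      (forall n : int, exists N : nat, forall m k : nat,
          (N <= m)%N -> (N <= k)%N -> vge v (u m - u k) n) ->
      exists l : F, forall n : int, exists N : nat, forall m : nat,
          (N <= m)%N -> vge v (u m - l) n;
  plf_residue_char : vge v (p%:R : F) 1;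
  plf_residue_card : exists s : seq F,
      [/\ size s = q, all (@in_OF F v) s,
          (forall i j : nat, (i < q)%N -> (j < q)%N ->
              vge v (nth 0 s i - nth 0 s j) 1 -> i = j) &
          (forall x : F, in_OF v x -> exists2 y, y \in s & vge v (x - y) 1)]
}.

Definition ram_index (F : fieldType) (p : nat) (v : F -> int) : int :=
  v (p%:R : F).

(* Z_p inside F: the closure of Z in F. *)
Definition in_Zp (F : fieldType) (v : F -> int) (x : F) : Prop :=
  forall n : int, exists z : int, vge v (x - z%:~R) n.

Definition Zp_unit (F : fieldType) (v : F -> int) (u : F) : Prop :=
  in_Zp v u /\ u != 0 /\ in_Zp v u^-1.

Notation SL2 F := {A : 'M[F]_2 | \det A == 1}.

Lemma det1_SL2 (F : fieldType) : \det (1%:M : 'M[F]_2) == 1.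
Proof. by rewrite det1. Qed.

HB.instance Definition _ (F : fieldType) :=
  isPointed.Build (SL2 F) (exist _ 1%:M (det1_SL2 F)).

Definition SL2_ball (F : fieldType) (v : F -> int) (g : 'M[F]_2) (n : int)
  : set (SL2 F) :=
  [set h : SL2 F | forall i j, vge v (proj1_sig h i j - g i j) n].

Definition SL2_balls (F : fieldType) (v : F -> int) : set (set (SL2 F)) :=
  [set B | exists g n, B = SL2_ball v g n].

(* SL_2(F) with its Borel sigma-algebra (generated by the open balls). *)
Definition SL2m (F : fieldType) (v : F -> int) :=
  g_sigma_algebraType (SL2_balls v).

Definition rtrans (F : fieldType) (v : F -> int) (S : set (SL2m v)) (g : SL2 F)
  : set (SL2m v) :=
  [set h : SL2 F | exists2 h0, S h0 & proj1_sig h = proj1_sig h0 *m proj1_sig g].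

Definition SL2_OF (F : fieldType) (v : F -> int) : set (SL2m v) :=
  [set h : SL2 F | forall i j, in_OF v (proj1_sig h i j)].

Definition S_F (F : fieldType) (v : F -> int) (a : F) : set (SL2m v) :=
  [set h : SL2 F | forall i j : 'I_2,
     in_OF v (if j == 0 then a * proj1_sig h i j else proj1_sig h i j)].

Arguments SL2_ball {F} v g n.
Arguments SL2_balls {F} v.
Arguments SL2m {F} v.
Arguments SL2_OF {F} v.
Arguments S_F {F} v a.
Arguments rtrans {F v} S g.

Definition right_haar_normalized (F : fieldType) (v : F -> int) (R : realType)
  (nu : {measure set (SL2m v) -> \bar R}) : Prop :=
  (forall (S : set (SL2m v)) (g : SL2 F), measurable S ->
      nu (rtrans S g) = nu S) /\
  nu (SL2_OF v) = 1%E.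

(* Main.v *)
Require Import Defs.
From HB Require Import structures.
From mathcomp Require Import all_boot all_order all_algebra.
From mathcomp Require Import all_classical all_reals all_analysis.
From mathcomp Require Import zify ring.
Import Order.TTheory GRing.Theory Num.Theory.
Set Implicit Arguments.
Unset Strict Implicit.
Local Open Scope ring_scope.

Section Val.
Variables (F : fieldType) (v : F -> int).
Hypothesis vmul : forall x y : F, x != 0 -> y != 0 -> v (x * y) = v x + v y.

Lemma v1 : v 1 = 0.
Proof. have := vmul (oner_neq0 F) (oner_neq0 F); rewrite mulr1 => /(congr1 (fun z => z - v 1)); rewrite subrr addrK => <-. by []. Qed.

Lemma vN1 : v (-1) = 0.
Proof.
have h : (-1 : F) != 0 by rewrite oppr_eq0 oner_neq0.
have := vmul h h; rewrite mulrNN mulr1 v1; lia.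
Qed.

Lemma vN x : x != 0 -> v (- x) = v x.
Proof.
move=> x0; have h : (-1 : F) != 0 by rewrite oppr_eq0 oner_neq0.
by rewrite -mulN1r vmul // vN1 add0r.
Qed.

Lemma vV x : x != 0 -> v (x^-1) = - v x.
Proof.
move=> x0; have := vmul x0 (invr_neq0 x0); rewrite mulfV // v1; lia.
Qed.

Lemma vX x m : x != 0 -> v (x ^+ m) = (m%:Z * v x).
Proof.
move=> x0; elim: m => [|m IH]; first by rewrite expr0 v1 mul0r.
rewrite exprS vmul ?expf_neq0 // IH; lia.
Qed.

Lemma vgeE x n : x != 0 -> vge v x n = (n <= v x).
Proof. by rewrite /vge => /negPf ->. Qed.

Lemma vge0 n : vge v 0 n.
Proof. by rewrite /vge eqxx. Qed.

Lemma vge_le m n x : m <= n -> vge v x n -> vge v x m.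
Proof. by rewrite /vge => mn /orP [->//|h]; apply/orP; right; apply: le_trans h. Qed.

Lemma vgeMl c x n : c != 0 -> vge v (c * x) n = vge v x (n - v c).
Proof.
move=> c0; have [->|x0] := eqVneq x 0; first by rewrite mulr0 !vge0.
rewrite !vgeE ?mulf_neq0 // vmul //; apply/idP/idP; lia.
Qed.

Lemma vgeMr c x n : c != 0 -> vge v (x * c) n = vge v x (n - v c).
Proof. by move=> c0; rewrite mulrC vgeMl. Qed.

Lemma vgeM x y m n : vge v x m -> vge v y n -> vge v (x * y) (m + n).
Proof.
have [->|x0] := eqVneq x 0; first by rewrite mul0r !vge0.
move=> hx hy; rewrite vgeMl //; apply: vge_le hy; rewrite vgeE // in hx; lia.
Qed.

Lemma vgeN x n : vge v (- x) n = vge v x n.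
Proof.
have [->|x0] := eqVneq x 0; first by rewrite oppr0.
by rewrite !vgeE ?oppr_eq0 // vN.
Qed.

Hypothesis vadd : forall x y : F, x != 0 -> y != 0 -> x + y != 0 ->
               Num.min (v x) (v y) <= v (x + y).

Lemma vgeD x y n : vge v x n -> vge v y n -> vge v (x + y) n.
Proof.
have [->|x0] := eqVneq x 0; first by rewrite add0r.
have [->|y0] := eqVneq y 0; first by rewrite addr0.
have [->|s0] := eqVneq (x + y) 0; first by rewrite vge0.
rewrite !vgeE // => hx hy; apply: le_trans (vadd x0 y0 s0).
by rewrite le_min hx hy.
Qed.

Lemma vgeB x y n : vge v x n -> vge v y n -> vge v (x - y) n.
Proof. by move=> hx hy; apply: vgeD => //; rewrite vgeN. Qed.

Lemma vge_nat m : vge v (m%:R : F) 0.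
Proof.
elim: m => [|m IH]; first by rewrite vge0.
rewrite -addn1 natrD; apply: vgeD => //; by rewrite vgeE ?oner_neq0 // v1.
Qed.

Lemma vge_int (z : int) : vge v (z%:~R : F) 0.
Proof. by case: z => m; rewrite ?NegzE ?mulrNz ?vgeN vge_nat. Qed.

Lemma Zp_OF x : in_Zp v x -> vge v x 0.
Proof.
move=> /(_ 0) [z hz]; rewrite -(subrK (z%:~R) x); apply: vgeD => //.
exact: vge_int.
Qed.

End Val.

Section Reps.
Variables (F : fieldType) (v : F -> int).
Hypothesis vmul : forall x y : F, x != 0 -> y != 0 -> v (x * y) = v x + v y.
Hypothesis vadd : forall x y : F, x != 0 -> y != 0 -> x + y != 0 ->
               Num.min (v x) (v y) <= v (x + y).
Variables (pi : F) (pi0 : pi != 0) (vpi : v pi = 1).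
Variables (q : nat) (s : seq F).
Hypothesis sq : size s = q.
Hypothesis sO : all (@in_OF F v) s.
Hypothesis sdist : forall i j : nat, (i < q)%N -> (j < q)%N ->
              vge v (nth 0 s i - nth 0 s j) 1 -> i = j.
Hypothesis scomp : forall x : F, in_OF v x -> exists2 y, y \in s & vge v (x - y) 1.

Definition rr (i : 'I_q) := nth 0 s i.
Definition rep (t : seq 'I_q) : F := foldr (fun i acc => rr i + pi * acc) 0 t.

Lemma rr_O i : vge v (rr i) 0.
Proof. by move/allP: sO; apply; rewrite /rr mem_nth // sq. Qed.

Lemma pi_ge1 : vge v pi 1.
Proof. by rewrite vgeE // vpi. Qed.

Lemma rep_O t : vge v (rep t) 0.
Proof.
elim: t => [|i t IH] /=; first exact: vge0.
apply: vgeD => //; first exact: rr_O.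
apply: (@vge_le _ _ _ 1); first by [].
by have := vgeM vmul pi_ge1 IH; rewrite addr0.
Qed.

Lemma rep_cover m x : vge v x 0 -> exists t : m.-tuple 'I_q, vge v (x - rep t) m%:Z.
Proof.
elim: m x => [|m IH] x hx.
  by exists [tuple]; rewrite /= subr0.
have [y ys hy] := scomp hx.
have iq : (index y s < q)%N by rewrite -sq index_mem.
set i := Ordinal iq.
have ry : rr i = y by rewrite /rr nth_index.
have hx1 : vge v ((x - y) * pi^-1) 0.
  by rewrite vgeMr ?invr_neq0 // vV // vpi.
have [t ht] := IH _ hx1.
exists [tuple of i :: t]; rewrite /= ry.
have -> : x - (y + pi * rep t) = pi * ((x - y) * pi^-1 - rep t).
  by rewrite mulrBr mulrCA mulfV // mulr1 opprD addrA.
by rewrite vgeMl // vpi; apply: vge_le ht; lia.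
Qed.

Lemma rep_inj (t t' : seq 'I_q) : size t = size t' ->
  vge v (rep t - rep t') (size t)%:Z -> t = t'.
Proof.
elim: t t' => [|i t IH] [|i' t'] //= [st] h.
have hd : vge v (rr i - rr i') 1.
  have -> : rr i - rr i' = (rr i + pi * rep t - (rr i' + pi * rep t'))
                              - pi * (rep t - rep t').
    by rewrite mulrBr; ring.
  apply: vgeB => //; first by apply: vge_le h; lia.
  have := vgeM vmul pi_ge1 (vgeB vmul vadd (rep_O t) (rep_O t')).
  by rewrite addr0.
have ii : i = i'.
  by apply: ord_inj; exact: (sdist (ltn_ord i) (ltn_ord i') hd).
subst i'; congr (_ :: _); apply: IH => //.
move: h; have -> : rr i + pi * rep t - (rr i + pi * rep t') = pi * (rep t - rep t').
  by ring.
by rewrite vgeMl // vpi; apply: vge_le; lia.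
Qed.

End Reps.

Lemma det2 (F : fieldType) (A : 'M[F]_2) : \det A = A 0 0 * A 1 1 - A 0 1 * A 1 0.
Proof.
rewrite (expand_det_row _ 0) !big_ord_recr /= big_ord0 add0r /cofactor !det_mx11 !mxE /=.
rewrite !expr0 !expr1 !mul1r mulN1r mulrN.
by congr (A _ _ * A _ _ - A _ _ * A _ _); apply: val_inj.
Qed.

Lemma mulmx2E (F : fieldType) (A B : 'M[F]_2) i j : (A *m B) i j = A i 0 * B 0 j + A i 1 * B 1 j.
Proof.
have e0 : widen_ord (leqnSn 1) ord_max = 0 :> 'I_2 by apply: val_inj.
have e1 : ord_max = 1 :> 'I_2 by apply: val_inj.
by rewrite mxE !big_ord_recr /= big_ord0 add0r e0 e1.
Qed.

Lemma mxBij (F : fieldType) (A B : 'M[F]_2) i j : (A - B) i j = A i j - B i j.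
Proof. by rewrite !mxE. Qed.

Lemma mxDij (F : fieldType) (A B : 'M[F]_2) i j : (A + B) i j = A i j + B i j.
Proof. by rewrite !mxE. Qed.

Lemma I2 (i : 'I_2) : i = 0 \/ i = 1.
Proof. by case: i => [[|[|]]] // H; [left|right]; apply: val_inj. Qed.

Local Open Scope classical_set_scope.

Section Mx.
Variables (F : fieldType) (v : F -> int).
Hypothesis vmul : forall x y : F, x != 0 -> y != 0 -> v (x * y) = v x + v y.
Hypothesis vadd : forall x y : F, x != 0 -> y != 0 -> x + y != 0 ->
               Num.min (v x) (v y) <= v (x + y).

Definition mvge (A : 'M[F]_2) (n : int) := forall i j, vge v (A i j) n.

Lemma mvgeD A B n : mvge A n -> mvge B n -> mvge (A + B) n.
Proof. by move=> hA hB i j; rewrite mxE; apply: vgeD. Qed.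

Lemma mvgeB A B n : mvge A n -> mvge B n -> mvge (A - B) n.
Proof. by move=> hA hB i j; rewrite !mxE; apply: vgeB. Qed.

Lemma mvgeM A B m n : mvge A m -> mvge B n -> mvge (A *m B) (m + n).
Proof. by move=> hA hB i j; rewrite mulmx2E; apply: vgeD => //; apply: vgeM. Qed.

Lemma mvge_le A m n : m <= n -> mvge A n -> mvge A m.
Proof. by move=> mn hA i j; apply: vge_le (hA i j). Qed.

Lemma vge_abs x : vge v x (- (`|v x|%N)%:Z).
Proof.
have [->|x0] := eqVneq x 0; first exact: vge0.
by rewrite vgeE //; lia.
Qed.

Lemma mx_bound A : exists K : nat, mvge A (- K%:Z).
Proof.
pose a1 := absz (v (A 0 0)); pose a2 := absz (v (A 0 1)).
pose a3 := absz (v (A 1 0)); pose a4 := absz (v (A 1 1)).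
exists (a1 + a2 + a3 + a4)%N => i j.
by case: (I2 i) => ->; case: (I2 j) => ->; (apply: vge_le (vge_abs _); lia).
Qed.

Variables (pi : F) (pi0 : pi != 0) (vpi : v pi = 1).
Variables (q : nat) (s : seq F).
Hypothesis sq : size s = q.
Hypothesis sO : all (@in_OF F v) s.
Hypothesis scomp : forall x : F, in_OF v x -> exists2 y, y \in s & vge v (x - y) 1.

Lemma SL2_ball_meas (c : 'M[F]_2) (n : int) : measurable (SL2_ball v c n : set (SL2m v)).
Proof. by apply: sub_sigma_algebra; exists c, n. Qed.

Lemma E_meas (P Q : 'M[F]_2) : P *m Q = 1%:M -> Q *m P = 1%:M ->
  measurable [set h : SL2m v | mvge (proj1_sig h *m P) 0].
Proof.
move=> PQ QP.
have [K1 hP] := mx_bound P; have [K2 hQ] := mx_bound Q.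
set K := (K1 + K2)%N.
have hP' : mvge P (- K%:Z) by apply: mvge_le hP; lia.
have hQ' : mvge Q (- K%:Z) by apply: mvge_le hQ; lia.
pose Ym (phi : {ffun 'I_2 * 'I_2 -> (K + K).-tuple 'I_q}) :=
  \matrix_(i, j) rep pi s (phi (i, j)).
have YO phi : mvge (Ym phi) 0.
  by move=> i j; rewrite mxE; apply: (rep_O vmul vadd pi0 vpi sq sO).
suff -> : [set h : SL2m v | mvge (proj1_sig h *m P) 0] =
   \bigcup_(phi in [set: {ffun 'I_2 * 'I_2 -> (K + K).-tuple 'I_q}])
      (SL2_ball v (Ym phi *m Q) K%:Z : set (SL2m v)).
  by apply: fin_bigcup_measurable; [exact: finite_finset| move=> phi _; exact: SL2_ball_meas].
apply/seteqP; split => h /=.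
- move=> hX.
  have : forall ij : 'I_2 * 'I_2, exists t : (K + K).-tuple 'I_q,
      vge v ((proj1_sig h *m P) ij.1 ij.2 - rep pi s t) (K + K)%N%:Z.
    by move=> [i j]; apply: (rep_cover vmul pi0 vpi sq sO scomp); apply: hX.
  case/fin_all_exists => f hf.
  exists (finfun f) => //= i j.
  have H : mvge ((proj1_sig h *m P - Ym (finfun f)) *m Q) K%:Z.
    have := @mvgeM (proj1_sig h *m P - Ym (finfun f)) Q (K + K)%N%:Z (- K%:Z).
    have -> : (K + K)%N%:Z + - K%:Z = K%:Z by lia.
    by apply => // i' j'; move: (hf (i', j')); rewrite /= !mxE ffunE.
  by move: (H i j); rewrite mulmxBl -mulmxA PQ mulmx1 mxBij.
- case=> phi _ hb.
  have -> : proj1_sig h *m P = (proj1_sig h - Ym phi *m Q) *m P + Ym phi.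
    by rewrite mulmxBl -mulmxA QP mulmx1 subrK.
  apply: mvgeD => //.
  have := @mvgeM (proj1_sig h - Ym phi *m Q) P K%:Z (- K%:Z).
  have -> : K%:Z + - K%:Z = 0 by lia.
  by apply => // i j; rewrite mxBij; apply: hb.
Qed.

End Mx.

Definition mx2 (F : fieldType) (x y z w : F) : 'M[F]_2 :=
  \matrix_(r, c) if r == 0 then (if c == 0 then x else y) else (if c == 0 then z else w).

Lemma mx2E (F : fieldType) (x y z w : F) :
  [/\ mx2 x y z w 0 0 = x, mx2 x y z w 0 1 = y, mx2 x y z w 1 0 = z & mx2 x y z w 1 1 = w].
Proof. by rewrite !mxE. Qed.

Lemma mx1E (F : fieldType) :
  [/\ (1%:M : 'M[F]_2) 0 0 = 1, (1%:M : 'M[F]_2) 0 1 = 0, (1%:M : 'M[F]_2) 1 0 = 0 & (1%:M : 'M[F]_2) 1 1 = 1].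
Proof. by rewrite !mxE. Qed.

Ltac mx2_simpl := let h := fresh in
  (have h := mx2E; do 4 (rewrite ?(proj1 (h _ _ _ _ _ _ _ _)) ?(proj2 (h _ _ _ _ _ _ _ _)))).

Section Coset.
Variables (F : fieldType) (v : F -> int).
Hypothesis vmul : forall x y : F, x != 0 -> y != 0 -> v (x * y) = v x + v y.
Hypothesis vadd : forall x y : F, x != 0 -> y != 0 -> x + y != 0 ->
               Num.min (v x) (v y) <= v (x + y).
Variables (pi : F) (pi0 : pi != 0) (vpi : v pi = 1).
Variables (a : F) (a0 : a != 0) (n : nat) (va : v a = n%:Z).

Definition gm i b := mx2 (pi ^+ i / a) b 0 (a / pi ^+ i).
Definition gi i b := mx2 (a / pi ^+ i) (- b) 0 (pi ^+ i / a).

Lemma piX0 i : pi ^+ i != 0. Proof. exact: expf_neq0. Qed.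

Lemma gm_gi i b : gm i b *m gi i b = 1%:M.
Proof.
have := piX0 i => p0.
apply/matrixP => r c; rewrite mulmx2E.
case: (I2 r) => ->; case: (I2 c) => ->; rewrite !mxE /=; (try field); by rewrite ?p0 ?a0.
Qed.

Lemma gi_gm i b : gi i b *m gm i b = 1%:M.
Proof.
have := piX0 i => p0.
apply/matrixP => r c; rewrite mulmx2E.
case: (I2 r) => ->; case: (I2 c) => ->; rewrite !mxE /=; (try field); by rewrite ?p0 ?a0.
Qed.

Lemma det_gm i b : \det (gm i b) = 1.
Proof. have := piX0 i => p0; rewrite det2 !mxE /=; field; by rewrite ?p0 ?a0. Qed.

Lemma det_gi i b : \det (gi i b) = 1.
Proof. have := piX0 i => p0; rewrite det2 !mxE /=; field; by rewrite ?p0 ?a0. Qed.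

Definition gS i b : SL2 F := exist (fun A : 'M[F]_2 => \det A == 1) (gm i b) (introT eqP (det_gm i b)).

Definition C i b : set (SL2m v) := rtrans (SL2_OF v) (gS i b).

Lemma C_E i b : C i b = [set h : SL2m v | mvge v (proj1_sig h *m gi i b) 0].
Proof.
apply/seteqP; split => h /=.
- case=> h0 h0O ->; rewrite /= -mulmxA gm_gi mulmx1 => r c; exact: h0O.
- move=> H.
  have dh : \det (proj1_sig h *m gi i b) == 1.
    by rewrite det_mulmx det_gi mulr1; exact: (proj2_sig h).
  exists (exist (fun A : 'M[F]_2 => \det A == 1) _ dh) => /=.
    by move=> r c; exact: H.
  by rewrite -mulmxA gi_gm mulmx1.
Qed.

Lemma vpiX i : v (pi ^+ i) = i%:Z.
Proof. by rewrite vX // vpi mulr1. Qed.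

Lemma v_pia i : v (pi ^+ i / a) = i%:Z - n%:Z.
Proof. by rewrite vmul ?invr_neq0 ?piX0 // vV // vpiX va. Qed.

Lemma v_api i : v (a / pi ^+ i) = n%:Z - i%:Z.
Proof. by rewrite vmul ?invr_neq0 ?piX0 // vV ?piX0 // vpiX va. Qed.

Lemma C_disj (H : 'M[F]_2) i i' b b' : \det H = 1 ->
  mvge v (H *m gi i b) 0 -> mvge v (H *m gi i' b') 0 ->
  i = i' /\ vge v (b - b') (n%:Z - i%:Z).
Proof.
move=> dH h1 h2.
set g := H *m gi i b.
have dg : \det g = 1 by rewrite det_mulmx dH det_gi mulr1.
have Hg : H = g *m gm i b by rewrite /g -mulmxA gi_gm mulmx1.
have h1' : mvge v g 0 := h1.
clearbody g.
pose ad := mx2 (g 1 1) (- g 0 1) (- g 1 0) (g 0 0).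
have adg : ad *m g = 1%:M.
  apply/matrixP => r c; rewrite mulmx2E; move: dg; rewrite det2 => dg.
  case: (I2 r) => ->; case: (I2 c) => ->; rewrite !mxE /=.
  - by rewrite -dg; ring.
  - by ring.
  - by ring.
  - by rewrite -dg; ring.
have adO : mvge v ad 0.
  move=> r c; case: (I2 r) => ->; case: (I2 c) => ->; rewrite !mxE /= ?(vgeN vmul); exact: h1'.
have E : ad *m (H *m gi i' b') = gm i b *m gi i' b'.
  rewrite Hg.
  by rewrite !mulmxA adg mul1mx.
have M : mvge v (gm i b *m gi i' b') 0.
  by rewrite -E; have := mvgeM vmul vadd adO h2; rewrite addr0.
have p0 := piX0 i; have p0' := piX0 i'.
have e00 : (gm i b *m gi i' b') 0 0 = pi ^+ i * (pi ^+ i')^-1.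
  by rewrite mulmx2E !mxE /=; field; rewrite ?p0' ?a0.
have e11 : (gm i b *m gi i' b') 1 1 = pi ^+ i' * (pi ^+ i)^-1.
  by rewrite mulmx2E !mxE /=; field; rewrite ?p0 ?a0.
have m00 := M 0 0; have m11 := M 1 1; have m01 := M 0 1.
rewrite e00 vgeE ?mulf_neq0 ?invr_neq0 // vmul ?invr_neq0 // vV // !vpiX in m00.
rewrite e11 vgeE ?mulf_neq0 ?invr_neq0 // vmul ?invr_neq0 // vV // !vpiX in m11.
have ii : i = i' by lia.
split => //; subst i'.
have e01 : (gm i b *m gi i b') 0 1 = (pi ^+ i / a) * (b - b').
  by rewrite mulmx2E !mxE /=; field; rewrite ?p0' ?a0.
by rewrite e01 vgeMl ?mulf_neq0 ?invr_neq0 // v_pia in m01; move: m01; rewrite sub0r opprB.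
Qed.


Lemma coverA (H : 'M[F]_2) : \det H = 1 ->
  (forall r, vge v (a * H r 0) 0) -> (forall r, vge v (H r 1) 0) ->
  a * H 0 0 != 0 -> vge v (a * H 1 0) (v (a * H 0 0)) ->
  exists i, (i <= n)%N /\ exists2 z, vge v z 0 &
     forall b, vge v (z - b) (n%:Z - i%:Z) -> mvge v (H *m gi i b) 0.
Proof.
move=> dH h0 h1 nz hle.
have dH' : H 0 0 * H 1 1 - H 0 1 * H 1 0 = 1 by rewrite -det2.
have H00 : H 0 0 != 0 by move: nz; rewrite mulf_eq0 negb_or => /andP[].
set i := absz (v (a * H 0 0)).
have vi : v (a * H 0 0) = i%:Z.
  by have := h0 0; rewrite vgeE // => hh; rewrite /i; lia.
have iln : (i <= n)%N.
  have : vge v a i%:Z.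
    have -> : a = (a * H 0 0) * H 1 1 - H 0 1 * (a * H 1 0).
      by rewrite -[a in LHS]mulr1 -dH'; ring.
    apply: vgeB => //.
    - have ai : vge v (a * H 0 0) i%:Z by rewrite vgeE // vi.
      by have := vgeM vmul ai (h1 1); rewrite addr0.
    - by have := vgeM vmul (h1 0) hle; rewrite add0r vi.
  by rewrite vgeE // va; lia.
have p0 := piX0 i.
set x := a * H 0 0 / pi ^+ i.
have x0 : x != 0 by rewrite /x mulf_neq0 ?invr_neq0.
have vx : v x = 0 by rewrite /x vmul ?invr_neq0 // vV // vi vpiX subrr.
have vxi : v x^-1 = 0 by rewrite vV // vx oppr0.
set y := a * H 1 0 / pi ^+ i.
have yO : vge v y 0 by rewrite /y vgeMr ?invr_neq0 // vV // vpiX sub0r opprK -vi.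
exists i; split => //; exists (H 0 1 / x).
  by rewrite vgeMr ?invr_neq0 // vxi subr0.
move=> b hb r c; rewrite mulmx2E.
case: (I2 r) => ->; case: (I2 c) => ->; rewrite !mxE /=.
- have -> : H 0 0 * (a / pi ^+ i) + H 0 1 * 0 = x by rewrite /x; field.
  by rewrite vgeE // vx.
- have -> : H 0 0 * - b + H 0 1 * (pi ^+ i / a) = (pi ^+ i / a) * (x * (H 0 1 / x - b)).
    by rewrite /x; field; rewrite ?p0 ?a0 ?H00.
  rewrite vgeMl ?mulf_neq0 ?invr_neq0 // vgeMl // vx v_pia.
  by apply: vge_le hb; lia.
- have -> : H 1 0 * (a / pi ^+ i) + H 1 1 * 0 = y by rewrite /y; field.
  exact: yO.
- have -> : H 1 0 * - b + H 1 1 * (pi ^+ i / a) =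
            x^-1 + (pi ^+ i / a) * (y * (H 0 1 / x - b)).
    apply/eqP; rewrite -subr_eq0.
    have -> : H 1 0 * - b + H 1 1 * (pi ^+ i / a) -
            (x^-1 + (pi ^+ i / a) * (y * (H 0 1 / x - b))) =
            pi ^+ i / (a * H 0 0) * (H 0 0 * H 1 1 - H 0 1 * H 1 0 - 1).
      by rewrite /x /y; field; rewrite ?p0 ?a0 ?H00.
    by rewrite dH' subrr mulr0.
  apply: (vgeD vadd); first by rewrite vgeE ?invr_neq0 // vxi.
  rewrite vgeMl ?mulf_neq0 ?invr_neq0 // v_pia.
  have := vgeM vmul yO hb; rewrite add0r; apply: vge_le; lia.
Qed.

Definition Jm := mx2 (0 : F) 1 (-1) 0.
Definition Jinv := mx2 (0 : F) (-1) 1 0.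

Lemma JH_E (H : 'M[F]_2) c : (Jm *m H) 0 c = H 1 c /\ (Jm *m H) 1 c = - H 0 c.
Proof. by rewrite !mulmx2E !mxE /=; split; ring. Qed.

Lemma Jinv_J : Jinv *m Jm = 1%:M.
Proof.
apply/matrixP => r c; rewrite mulmx2E.
by case: (I2 r) => ->; case: (I2 c) => ->; rewrite !mxE /=; ring.
Qed.

Lemma cover (H : 'M[F]_2) : \det H = 1 ->
  (forall r, vge v (a * H r 0) 0) -> (forall r, vge v (H r 1) 0) ->
  exists i, (i <= n)%N /\ exists2 z, vge v z 0 &
     forall b, vge v (z - b) (n%:Z - i%:Z) -> mvge v (H *m gi i b) 0.
Proof.
move=> dH h0 h1.
case: (boolP ((a * H 0 0 != 0) && vge v (a * H 1 0) (v (a * H 0 0)))).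
  by case/andP => nz hle; apply: coverA.
move=> hn.
have dH' : H 0 0 * H 1 1 - H 0 1 * H 1 0 = 1 by rewrite -det2.
have dJ : \det (Jm *m H) = 1.
  by rewrite det_mulmx dH mulr1 det2 !mxE /=; ring.
have [i [iln [z zO hz]]] : exists i, (i <= n)%N /\ exists2 z, vge v z 0 &
     forall b, vge v (z - b) (n%:Z - i%:Z) -> mvge v ((Jm *m H) *m gi i b) 0.
  apply: coverA => //.
  - move=> r; case: (I2 r) => ->; rewrite ?(proj1 (JH_E H 0)) ?(proj2 (JH_E H 0)) ?mulrN ?(vgeN vmul) //.
  - move=> r; case: (I2 r) => ->; rewrite ?(proj1 (JH_E H 1)) ?(proj2 (JH_E H 1)) ?(vgeN vmul) //.
  - case: (JH_E H 0) => -> _.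
    case: (eqVneq (a * H 0 0) 0) => [e|nz].
      have H00 : H 0 0 = 0 by move/eqP: e; rewrite mulf_eq0 (negPf a0) => /eqP.
      rewrite mulf_neq0 //; apply/eqP => H10; move: dH'.
      by rewrite H00 H10 !mul0r mulr0 subrr => /eqP; rewrite eq_sym oner_eq0.
    by apply: contraNneq hn => ->; rewrite nz vge0.
  - case: (JH_E H 0) => -> ->.
    rewrite mulrN (vgeN vmul).
    case: (eqVneq (a * H 0 0) 0) => [->|nz]; first exact: vge0.
    move: hn; rewrite nz /=.
    case: (eqVneq (a * H 1 0) 0) => [->|nz1]; first by rewrite vge0.
    by rewrite !vgeE // -ltNge => /ltW.
exists i; split => //; exists z => // b hb.
have -> : H = Jinv *m (Jm *m H) by rewrite mulmxA Jinv_J mul1mx.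
rewrite -mulmxA; have := mvgeM vmul vadd (_ : mvge v Jinv 0) (hz b hb).
rewrite addr0; apply.
by move=> r c; case: (I2 r) => ->; case: (I2 c) => ->; rewrite !mxE /= ?(vgeN vmul) ?vge0 // vgeE ?oner_neq0 // v1.
Qed.

End Coset.

Lemma in_bigsetU (T : Type) (I : eqType) (r : seq I) (G : I -> set T) x :
  (\big[setU/set0]_(i <- r) G i) x <-> exists2 i, i \in r & G i x.
Proof.
elim: r => [|y r IH]; first by rewrite big_nil; split => // [[]].
rewrite big_cons; split.
- case=> [h|/IH [i ir hi]]; first by exists y; rewrite ?mem_head.
  by exists i; rewrite // in_cons ir orbT.
- case=> i; rewrite in_cons => /orP [/eqP ->|ir] hi; first by left.
  by right; apply/IH; exists i.
Qed.

Lemma measure_seqU d (T : measurableType d) (R : realType)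
  (mu : {measure set T -> \bar R}) (I : eqType) (r : seq I) (G : I -> set T) :
  uniq r -> (forall i, i \in r -> measurable (G i)) ->
  (forall i j, i \in r -> j \in r -> i != j -> G i `&` G j = set0) ->
  mu (\big[setU/set0]_(i <- r) G i) = (\sum_(i <- r) mu (G i))%E.
Proof.
elim: r => [|x r IH] /=; first by rewrite !big_nil measure0.
move=> /andP[xr ur] hm hd.
rewrite !big_cons measureU.
- congr (_ + _)%E; apply: IH => // [i ir|i j ir jr]; first by apply: hm; rewrite in_cons ir orbT.
  by apply: hd; rewrite in_cons ?ir ?jr orbT.
- by apply: hm; rewrite mem_head.
- by rewrite big_seq; apply: bigsetU_measurable => i ir; apply: hm; rewrite in_cons ir orbT.
- apply/seteqP; split => // y [gx /in_bigsetU [j jr gj]].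
  have xj : x != j by apply: contraNneq xr => ->.
  have jr' : j \in x :: r by rewrite in_cons jr orbT.
  have := hd x j (mem_head _ _) jr' xj.
  by move/seteqP => [+ _] => /(_ y (conj gx gj)).
Qed.

Section Main.
Variables (F : fieldType) (v : F -> int).
Hypothesis vmul : forall x y : F, x != 0 -> y != 0 -> v (x * y) = v x + v y.
Hypothesis vadd : forall x y : F, x != 0 -> y != 0 -> x + y != 0 ->
               Num.min (v x) (v y) <= v (x + y).
Variables (pi : F) (pi0 : pi != 0) (vpi : v pi = 1).
Variables (q : nat) (s : seq F).
Hypothesis sq : size s = q.
Hypothesis sO : all (@in_OF F v) s.
Hypothesis sdist : forall i j : nat, (i < q)%N -> (j < q)%N ->
              vge v (nth 0 s i - nth 0 s j) 1 -> i = j.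
Hypothesis scomp : forall x : F, in_OF v x -> exists2 y, y \in s & vge v (x - y) 1.
Variables (a : F) (a0 : a != 0) (n : nat) (va : v a = n%:Z).
Variables (R : realType) (nu : {measure set (SL2m v) -> \bar R}).
Hypothesis Hnu : right_haar_normalized nu.

Let CC i b := C (v := v) pi0 a0 i b.

Lemma SF_E : S_F v a = [set h : SL2m v | mvge v (proj1_sig h *m mx2 a 0 0 1) 0].
Proof.
apply/seteqP; split => h /= H r c.
- rewrite mulmx2E !mxE /=.
  case: (I2 c) => ->; rewrite /= ?mulr0 ?addr0 ?mul0r ?add0r ?mulr1 1?mulrC.
  + exact: (H r 0).
  + exact: (H r 1).
- move: (H r c); rewrite mulmx2E !mxE /=.
  by case: (I2 c) => ->; rewrite /= ?mulr0 ?addr0 ?mul0r ?add0r ?mulr1 1?mulrC.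
Qed.

Lemma SF_meas : measurable (S_F v a).
Proof.
rewrite SF_E; apply: (E_meas vmul vadd pi0 vpi sq sO scomp (Q := mx2 a^-1 0 0 1)).
- apply/matrixP => r c; rewrite mulmx2E.
  by case: (I2 r) => ->; case: (I2 c) => ->; rewrite !mxE /=; (try field); rewrite ?a0.
- apply/matrixP => r c; rewrite mulmx2E.
  by case: (I2 r) => ->; case: (I2 c) => ->; rewrite !mxE /=; (try field); rewrite ?a0.
Qed.

Lemma C_meas i b : measurable (CC i b).
Proof.
rewrite /CC C_E; apply: (E_meas vmul vadd pi0 vpi sq sO scomp (Q := gm pi a i b)).
- exact: gi_gm.
- exact: gm_gi.
Qed.

Lemma OF_meas : measurable (SL2_OF v).
Proof.
suff -> : SL2_OF v = SL2_ball v 0 0 by exact: SL2_ball_meas.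
by apply/seteqP; split => h /= H i j; move: (H i j); rewrite mxE subr0.
Qed.

Lemma nuC i b : nu (CC i b) = 1%E.
Proof. by rewrite /CC /C (proj1 Hnu) ?(proj2 Hnu) //; exact: OF_meas. Qed.


Definition Z j : set (SL2m v) :=
  \big[setU/set0]_(t <- enum {: j.-tuple 'I_q}) CC (n - j) (rep pi s t).

Lemma C_sub i b : (i <= n)%N -> vge v b 0 -> CC i b `<=` S_F v a.
Proof.
move=> iln bO h; rewrite /CC C_E /= => Hh; rewrite SF_E /=.
have -> : proj1_sig h *m mx2 a 0 0 1 =
   (proj1_sig h *m gi pi a i b) *m (gm pi a i b *m mx2 a 0 0 1).
  by rewrite mulmxA -(mulmxA (proj1_sig h)) gi_gm // mulmx1.
have := mvgeM vmul vadd Hh (_ : mvge v (gm pi a i b *m mx2 a 0 0 1) 0).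
rewrite addr0; apply => r c; rewrite mulmx2E.
have p0 := piX0 pi0 i.
case: (I2 r) => ->; case: (I2 c) => ->; rewrite !mxE /=.
- have -> : pi ^+ i / a * a + b * 0 = pi ^+ i by field.
  by rewrite vgeE // (vpiX vmul pi0 vpi).
- by rewrite mulr0 add0r mulr1.
- by rewrite mul0r mulr0 addr0 vge0.
- rewrite mul0r add0r mulr1.
  have [->|ne] := eqVneq (a / pi ^+ i) 0; first exact: vge0.
  by rewrite vgeE // (v_api vmul pi0 vpi a0 va); lia.
Qed.

Lemma SF_union : S_F v a = \big[setU/set0]_(j <- index_iota 0 n.+1) Z j.
Proof.
apply/seteqP; split => h.
- move=> Sh.
  have dH : \det (proj1_sig h) = 1 by apply/eqP; exact: (proj2_sig h).
  have [i [iln [z zO hz]]] := cover vmul vadd pi0 vpi a0 va dH (fun r => Sh r 0) (fun r => Sh r 1).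
  have [t ht] := rep_cover vmul pi0 vpi sq sO scomp (n - i) zO.
  apply/in_bigsetU; exists (n - i)%N; first by rewrite mem_index_iota; lia.
  apply/in_bigsetU; exists t; first by rewrite mem_enum.
  rewrite subKn // /CC C_E /=; apply: hz.
  by apply: vge_le ht; lia.
- case/in_bigsetU => j; rewrite mem_index_iota => /andP[_ jn].
  case/in_bigsetU => t _; apply: C_sub; first exact: leq_subr.
  exact: (rep_O vmul vadd pi0 vpi sq sO).
Qed.

Lemma Z_meas j : measurable (Z j).
Proof. by apply: bigsetU_measurable => t _; exact: C_meas. Qed.

Lemma nuZ j : (j <= n)%N -> nu (Z j) = ((q ^ j)%:R)%:E.
Proof.
move=> jn; rewrite /Z measure_seqU.
- under eq_bigr => t _ do rewrite nuC.
  rewrite sumEFin big_enum sumr_const card_tuple card_ord /=.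
  by [].
- exact: enum_uniq.
- by move=> t _; exact: C_meas.
- move=> t t' _ _ tt'; apply/seteqP; split => // h [].
  rewrite /CC !C_E /= => h1 h2.
  have dH : \det (proj1_sig h) = 1 by apply/eqP; exact: (proj2_sig h).
  have [_ hb] := C_disj vmul vadd pi0 vpi a0 va dH h1 h2.
  move: hb => hb.
  have : val t = val t'.
    apply: (rep_inj vmul vadd pi0 vpi sq sO sdist); first by rewrite !size_tuple.
    by rewrite size_tuple; apply: vge_le hb; lia.
  by move/val_inj => e; move: tt'; rewrite e eqxx.
Qed.

Lemma main_count : nu (S_F v a) = (\sum_(j <- index_iota 0 n.+1) (q ^ j)%:R)%:E.
Proof.
rewrite SF_union measure_seqU.
- rewrite -sumEFin big_seq [RHS]big_seq; apply: eq_bigr => j.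
  by rewrite mem_index_iota => /andP[_ jn]; rewrite nuZ.
- exact: iota_uniq.
- by move=> j _; exact: Z_meas.
- move=> j j'; rewrite !mem_index_iota => /andP[_ jn] /andP[_ jn'] jj'.
  apply/seteqP; split => // h [].
  case/in_bigsetU => t _ h1; case/in_bigsetU => t' _ h2.
  rewrite /CC !C_E /= in h1 h2.
  have dH : \det (proj1_sig h) = 1 by apply/eqP; exact: (proj2_sig h).
  have [e _] := C_disj vmul vadd pi0 vpi a0 va dH h1 h2.
  have jj : j = j' by lia.
  by move: jj'; rewrite jj eqxx.
Qed.

End Main.

Theorem corollary2p4 (F : fieldType) (p : nat) (v : F -> int) (q : nat)
  (HF : padic_local_field p v q)
  (R : realType) (nu : {measure set (SL2m v) -> \bar R})
  (Hnu : right_haar_normalized nu)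
  (a : F) (Ha : in_Zp v a) (Ha0 : a != 0)
  (k : nat) (u : F) (Hu : Zp_unit v u) (Hk : a = (p%:R : F) ^+ k * u) :
  nu (S_F v a) =
  ((1 - (q%:R : R) ^+ (`|ram_index p v|%N * k + 1)) / (1 - q%:R))%:E.
Proof.
case: HF => pp char0 vmul vadd [pi [pi0 vpi]] _ pres [s [sq sO sdist scomp]].
have p0 : (p%:R : F) != 0.
  by apply/eqP => /char0 h; move: (prime_gt0 pp); rewrite h.
have vp1 : 1 <= v p%:R by move: pres; rewrite vgeE.
have [uin [u0 uin']] := Hu.
have vu : v u = 0.
  have h1 := Zp_OF vmul vadd uin; have h2 := Zp_OF vmul vadd uin'.
  rewrite vgeE // in h1; rewrite vgeE ?invr_neq0 // (vV vmul) // in h2; lia.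
set n := (`|ram_index p v|%N * k)%N.
have va : v a = n%:Z.
  rewrite Hk vmul ?expf_neq0 // (vX vmul) // vu addr0 /n /ram_index.
  have ab : (`|v p%:R|%N : int) = v p%:R by lia.
  by rewrite PoszM ab mulrC.
have q1 : (1 < q)%N.
  have O0 : in_OF v (0 : F) by exact: vge0.
  have O1 : in_OF v (1 : F) by rewrite /in_OF vgeE ?oner_neq0 // (v1 vmul).
  have [y0 y0s h0] := scomp 0 O0; have [y1 y1s h1] := scomp 1 O1.
  have i0 : (index y0 s < q)%N by rewrite -sq index_mem.
  have i1 : (index y1 s < q)%N by rewrite -sq index_mem.
  rewrite ltnNge; apply/negP => hq.
  have e : y0 = y1.
    rewrite -(nth_index 0 y0s) -(nth_index 0 y1s).
    have -> : index y0 s = 0%N by apply/eqP; rewrite -leqn0 -ltnS; exact: leq_trans i0 hq.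
    by have -> : index y1 s = 0%N by apply/eqP; rewrite -leqn0 -ltnS; exact: leq_trans i1 hq.
  have := vgeB vmul vadd h1 h0; rewrite e.
  have -> : 1 - y1 - (0 - y1) = 1 by ring.
  by rewrite vgeE ?oner_neq0 // (v1 vmul).
rewrite (main_count vmul vadd pi0 vpi sq sO sdist scomp Ha0 va Hnu).
congr (_%:E).
have q0 : (1 - q%:R : R) != 0.
  by rewrite subr_eq0 eq_sym pnatr_eq1; apply/eqP => e; move: q1; rewrite e.
rewrite big_mkord addn1.
have h : 1 - (q%:R : R) ^+ n.+1 = (1 - q%:R) * \sum_(i < n.+1) (q%:R : R) ^+ i.
  by rewrite -opprB subrX1 -mulNr opprB.
rewrite h.
under eq_bigr => i _ do rewrite natrX.
by field.
Qed.
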